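(* Assume the capacities satisfy (C1)–(C3). Let $\{\overline Z_t\}_{t\ge0}$ be the generation sizes of the NR-process defined below, and let $\{\mathcal N_t\}_{t\ge0}$ be the reachable sets of a uniformly chosen node $A$ in the Poissonian random graph $G_N$. For $\eta,\delta\in(-1/2,1/2)$ and all $t\le(1/2+\eta)\log_\nu N$, $$\mathbb P\Big(\sum_{k=0}^t\overline Z_k>N^{1/2+\delta}\Big)=O\big((\log_\nu N)N^{-(\delta-\eta)}\big)\quad\text{and}\quad\mathbb P\big(|\mathcal N_t|>N^{1/2+\delta}\big)=O\big((\log_\nu N)N^{-(\delta-\eta)}\big).$$
   Context: Capacities $\lambda_1,\dots,\lambda_N>0$ deterministic; $l_N=\sum_i\lambda_i$, $\mu_N=\frac1N\sum_i\lambda_i$, $\nu_N=\sum_i\lambda_i^2/\sum_i\lambda_i$, $f^{(N)}_n=\frac1N\sum_i e^{-\lambda_i}\frac{\lambda_i^n}{n!}$, $g^{(N)}_n=\frac{1}{N\mu_N}\sum_i e^{-\lambda_i}\frac{\lambda_i^{n+1}}{n!}$; $d_{TV}(p,q)=\frac12\sum_j|p_j-q_j|$. (C1): there are $\mu\in(0,\infty)$, $\nu\in(1,\infty)$, $\alpha_1>0$ with $|\mu_N-\mu|,|\nu_N-\nu|=O(N^{-\alpha_1})$. (C2): there are $N$-independent sequences $f,g$ and $\alpha_2>0$ with $d_{TV}(f^{(N)},f),d_{TV}(g^{(N)},g)=O(N^{-\alpha_2})$. (C3): there is $\tau>3$ such that for every $\varepsilon>0$ (with $\gamma:=\frac1{\tau-1}+\varepsilon<\frac12$),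 $\limsup_N\frac1N\sum_i\lambda_i^{\tau-1-\varepsilon}<\infty$ and $\max_i\lambda_i\le N^\gamma$. NR-process: marked branching process with $\overline Z_0=1$, root mark uniform on $\{1,\dots,N\}$; an individual with mark $m$ has, independently for each $i\in\{1,\dots,N\}$, a Poisson$(\lambda_i\lambda_m/l_N)$ number of children with mark $i$, independently over individuals; $\overline Z_t$ is the size of generation $t$. Poissonian random graph: independent Poisson$(\lambda_i\lambda_j/l_N)$ numbers of edges between distinct nodes $i,j$; $\mathcal N_t=\{j: d(A,j)\le t\}$ with $d$ the graph distance. *)

(* Defs.v *)
From HB Require Import structures.
From mathcomp Require Import all_boot all_order all_algebra.
From mathcomp Require Import all_classical all_reals all_analysis.
Set Implicit Arguments.
Unset Strict Implicit.
Unset Printing Implicit Defensive.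
Import Order.TTheory GRing.Theory Num.Theory.
Local Open Scope ring_scope.

Section Defs.
Variable R : realType.
(* capacities of the N-th model: lam N i, i in 'I_N = {0,...,N-1} *)
Variable lam : forall N : nat, 'I_N -> R.

Definition lN (N : nat) : R := \sum_(i < N) lam i.
Definition muN (N : nat) : R := N%:R^-1 * \sum_(i < N) lam i.
Definition nuN (N : nat) : R := (\sum_(i < N) lam i ^+ 2) / lN N.
Definition fN (N : nat) (n : nat) : R :=
  N%:R^-1 * \sum_(i < N) expR (- lam i) * lam i ^+ n / n`!%:R.
Definition gN (N : nat) (n : nat) : R :=
  (N%:R * muN N)^-1 * \sum_(i < N) expR (- lam i) * lam i ^+ n.+1 / n`!%:R.

Definition logb (b x : R) : R := ln x / ln b.

(* Given the current generation, listed as the sequence s of marks of its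
   individuals, the offspring is described by X (j, i) = number of children
   of mark i of the j-th individual; these are independent
   Poisson(lam_i lam_{s_j} / l_N) variables. *)
Definition nr_weight (N : nat) (s : seq 'I_N)
    (X : {ffun 'I_(size s) * 'I_N -> nat}) : R :=
  \prod_(j < size s) \prod_(i < N)
     poisson_pmf (lam i * lam (tnth (in_tuple s) j) / lN N) (X (j, i)).

Definition nr_children (N : nat) (s : seq 'I_N)
    (X : {ffun 'I_(size s) * 'I_N -> nat}) : seq 'I_N :=
  flatten [seq flatten [seq nseq (X (j, i)) i | i <- enum 'I_N]
          | j <- enum 'I_(size s)].

(* nr_tail N M k acc s = P( acc + sum_{u=0}^{k} Z'_u > M ) where Z'_u are the
   generation sizes of the NR-process started from a generation with marks s
   (so Z'_0 = size s). *)
Fixpoint nr_tail (N : nat) (M : R) (k : nat) (acc : nat) (s : seq 'I_N)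
    {struct k} : \bar R :=
  match k with
  | 0 => if M < (acc + size s)%:R then 1%E else 0%E
  | k'.+1 => \esum_(X in [set: {ffun 'I_(size s) * 'I_N -> nat}])
               ((nr_weight X)%:E * @nr_tail N M k' (acc + size s) (nr_children X))%E
  end.

(* P( sum_{k=0}^t Zbar_k > M ), root mark uniform on the N nodes *)
Definition nr_prob (N t : nat) (M : R) : \bar R :=
  \sum_(m < N) ((N%:R^-1)%:E * @nr_tail N M t 0 [:: m])%E.

(* multigraph: E (i, j) = number of edges between i and j, only used for
   i < j; independent Poisson(lam_i lam_j / l_N) numbers. *)
Definition pg_weight (N : nat) (E : {ffun 'I_N * 'I_N -> nat}) : R :=
  \prod_(p : 'I_N * 'I_N)
    (if (p.1 < p.2)%N then poisson_pmf (lam p.1 * lam p.2 / lN N) (E p)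
     else if E p == 0%N then 1 else 0).

Definition pg_adj (N : nat) (E : {ffun 'I_N * 'I_N -> nat}) (i j : 'I_N) : bool :=
  ((i < j)%N && (0 < E (i, j))%N) || ((j < i)%N && (0 < E (j, i))%N).

Fixpoint ball (N : nat) (E : {ffun 'I_N * 'I_N -> nat}) (A : 'I_N) (t : nat)
    : {set 'I_N} :=
  match t with
  | 0 => [set A]
  | t'.+1 => ball E A t' :|: [set j | [exists i in ball E A t', pg_adj E i j]]
  end.

(* P( |N_t| > M ), A uniform on the N nodes *)
Definition pg_prob (N t : nat) (M : R) : \bar R :=
  \sum_(A < N) ((N%:R^-1)%:E *
    \esum_(E in [set: {ffun 'I_N * 'I_N -> nat}])
       ((pg_weight E)%:E * (if (M < #|ball E A t|%:R)%R then 1 else 0)%E))%E.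

End Defs.

Definition dTV (R : realType) (p q : nat -> R) : \bar R :=
  ((2^-1 : R)%:E * \esum_(j in [set: nat]) (`|p j - q j|)%:E)%E.

(* Main.v *)
Require Import Defs.
From HB Require Import structures.
From mathcomp Require Import all_boot all_order all_algebra.
From mathcomp Require Import all_classical all_reals all_analysis.
Import Order.TTheory GRing.Theory Num.Theory.
Local Open Scope ring_scope.
From mathcomp Require Import ring lra.
Section P1.
Variable R : realType.

Lemma exp_partial (x : R) n : 0 <= x ->
  \sum_(k < n) x ^+ k / k`!%:R <= expR x.
Proof.
move=> x0; rewrite /expR.
have ND : nondecreasing_seq (series (exp_coeff x)).
  rewrite seriesEnat; apply: (@nondecreasing_series _ _ xpredT 0) => k _ _.
  by rewrite /exp_coeff /= divr_ge0 // exprn_ge0.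
have := @nondecreasing_cvgn_le _ (series (exp_coeff x)) ND (is_cvg_series_exp_coeff x) n.
by rewrite seriesEord /=.
Qed.

Lemma pois_partial1 (r : R) n : 0 < r -> \sum_(k < n) poisson_pmf r k <= 1.
Proof.
move=> r0; rewrite /poisson_pmf r0 -big_distrl /=.
apply: (le_trans (y := expR r * expR (- r))); last by rewrite expRxMexpNx_1.
by rewrite ler_wpM2r ?expR_ge0 // (@exp_partial r n (ltW r0)).
Qed.

Lemma pois_partial2 (r : R) n : 0 < r ->
  \sum_(k < n) k%:R * poisson_pmf r k <= r.
Proof.
move=> r0; case: n => [|n]; first by rewrite big_ord0 ltW.
rewrite big_ord_recl /= mul0r add0r.
apply: (le_trans (y := r * \sum_(k < n) poisson_pmf r k)); last first.
  by rewrite -[leRHS]mulr1; apply: ler_wpM2l; [exact: ltW | exact: pois_partial1].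
rewrite big_distrr /= le_eqVlt; apply/orP; left; apply/eqP.
apply: eq_bigr => k _; rewrite /poisson_pmf r0 /bump /= add1n.
rewrite factS natrM exprS invfM.
field; apply/andP; split; [by rewrite pnatr_eq0 -lt0n fact_gt0 | by rewrite addrC natr1 pnatr_eq0].
Qed.

End P1.
Section P2.
Variable R : realType.

Lemma box (I : finType) (h : I -> nat -> R) (b : I -> R) (s : seq {ffun I -> nat}) :
  (forall i k, 0 <= h i k) -> (forall i n, \sum_(k < n) h i k <= b i) -> uniq s ->
  \sum_(X <- s) \prod_i h i (X i) <= \prod_i b i.
Proof.
move=> h0 hb us.
pose m := (\max_(X <- s) \max_i X i).
have Hlt : forall X, X \in s -> forall i, (X i < m.+1)%N.
  move=> X Xs i; rewrite ltnS.
  apply: (leq_trans (n := \max_i X i)); first by apply: (leq_bigmax_cond (F := fun i => X i)).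
  by rewrite /m (big_rem _ Xs) /= leq_maxl.
pose phi (X : {ffun I -> nat}) : {ffun I -> 'I_m.+1} := [ffun i => inord (X i)].
have E : \sum_(X <- s) \prod_i h i (X i) =
         \sum_(X <- s) \prod_i h i (phi X i).
  apply: eq_big_seq => X Xs; apply: eq_bigr => i _.
  by rewrite /phi ffunE (@inordK m) // Hlt.
rewrite E -(big_map phi xpredT (fun Y => \prod_i h i (Y i))).
have ut : uniq (map phi s).
  rewrite map_inj_in_uniq // => X Y Xs Ys /ffunP eXY; apply/ffunP => i.
  have := eXY i; rewrite /phi !ffunE => /(congr1 (@nat_of_ord _)).
  by rewrite !inordK ?Hlt.
rewrite big_uniq //=.
apply: (le_trans (y := \sum_(Y : {ffun I -> 'I_m.+1}) \prod_i h i (Y i))).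
  rewrite [leRHS](bigID (fun Y => Y \in map phi s)) /= lerDl.
  by apply: sumr_ge0 => Y _; apply: prodr_ge0 => i _.
rewrite -(bigA_distr_bigA (fun i (k : 'I_m.+1) => h i k)) /=.
apply: ler_prod => i _; apply/andP; split; first by apply: sumr_ge0.
exact: hb.
Qed.

End P2.
Section P3.
Variable R : realType.
Variable lam : forall N : nat, 'I_N -> R.
Variable N : nat.
Hypothesis lam_pos : forall i : 'I_N, 0 < lam N i.
Hypothesis lN_pos : 0 < lN lam N.

Lemma pair_sumE (I J : finType) (F : I * J -> R) :
  \sum_q F q = \sum_i \sum_j F (i, j).
Proof. by rewrite pair_big /=; apply: eq_bigr => -[]. Qed.

Lemma pair_prodE (I J : finType) (F : I * J -> R) :
  \prod_q F q = \prod_i \prod_j F (i, j).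
Proof. by rewrite pair_big /=; apply: eq_bigr => -[]. Qed.

Definition Ls (s : seq 'I_N) : R := \sum_(x <- s) lam N x.

Definition rate {s : seq 'I_N} (q : 'I_(size s) * 'I_N) : R :=
  lam N q.2 * lam N (tnth (in_tuple s) q.1) / lN lam N.

Lemma rate_pos (s : seq 'I_N) (q : 'I_(size s) * 'I_N) : 0 < rate q.
Proof. by rewrite /rate divr_gt0 // mulr_gt0. Qed.

Lemma children_sum (phi : 'I_N -> R) s (X : {ffun 'I_(size s) * 'I_N -> nat}) :
  \sum_(x <- nr_children X) phi x = \sum_(q : 'I_(size s) * 'I_N) (X q)%:R * phi q.2.
Proof.
rewrite /nr_children big_flatten big_map big_enum /=.
rewrite pair_sumE.
apply: eq_bigr => j _.
rewrite big_flatten big_map big_enum /=; apply: eq_bigr => i _.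
by rewrite big_nseq iter_addr_0 mulr_natl.
Qed.

Lemma weightE s (X : {ffun 'I_(size s) * 'I_N -> nat}) :
  nr_weight lam X = \prod_(q : 'I_(size s) * 'I_N) poisson_pmf (rate q) (X q).
Proof.
by rewrite /nr_weight pair_prodE.
Qed.

Lemma E0 s (t : seq {ffun 'I_(size s) * 'I_N -> nat}) : uniq t ->
  \sum_(X <- t) nr_weight lam X <= 1.
Proof.
move=> ut; under eq_bigr do rewrite weightE.
apply: (le_trans (y := \prod_(q : 'I_(size s) * 'I_N) (1:R))); last by rewrite big1.
apply: (@box R _ (fun q k => poisson_pmf (rate q) k) (fun _ => 1) t) => //; first by move=> q k; exact: poisson_pmf_ge0.
by move=> q n; apply: pois_partial1; apply: rate_pos.
Qed.

Lemma E1 s (t : seq {ffun 'I_(size s) * 'I_N -> nat}) p : uniq t ->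
  \sum_(X <- t) nr_weight lam X * (X p)%:R <= rate p.
Proof.
move=> ut.
have -> : rate p = \prod_q (if q == p then rate q else 1).
  by rewrite (bigD1 p) //= eqxx big1 ?mulr1 // => q /negPf ->.
have E : forall X : {ffun 'I_(size s) * 'I_N -> nat}, nr_weight lam X * (X p)%:R =
   \prod_q ((if q == p then (X q)%:R else 1) * poisson_pmf (rate q) (X q)).
  move=> X; rewrite weightE big_split /= mulrC; congr (_ * _).
  by rewrite (bigD1 p) //= eqxx big1 ?mulr1 // => q /negPf ->.
rewrite (eq_bigr _ (fun X _ => E X)).
apply: (@box R _ (fun q k => (if q == p then k%:R else 1) * poisson_pmf (rate q) k)) => //.
  by move=> q k; rewrite mulr_ge0 ?poisson_pmf_ge0 //; case: ifP.
move=> q n; case: ifP => _; last by under eq_bigr do rewrite mul1r; apply: pois_partial1; apply: rate_pos.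
by apply: pois_partial2; apply: rate_pos.
Qed.


Fixpoint cc (k : nat) : R := if k is k'.+1 then 1 + cc k' * nuN lam N else 0.

Lemma nuN_ge0 : 0 <= nuN lam N.
Proof. by rewrite /nuN divr_ge0 ?(ltW lN_pos) // sumr_ge0 // => i _; rewrite sqr_ge0. Qed.

Lemma cc_ge0 k : 0 <= cc k.
Proof. by elim: k => [|k IH] //=; rewrite addr_ge0 // mulr_ge0 // nuN_ge0. Qed.

Lemma Ls_ge0 s : 0 <= Ls s.
Proof. by rewrite /Ls sumr_ge0 // => i _; rewrite ltW. Qed.

Lemma weight_ge0 s (X : {ffun 'I_(size s) * 'I_N -> nat}) : 0 <= nr_weight lam X.
Proof. by rewrite /nr_weight prodr_ge0 // => j _; rewrite prodr_ge0 // => i _; apply: poisson_pmf_ge0. Qed.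

Lemma rate_sum s (g : 'I_N -> R) :
  \sum_(q : 'I_(size s) * 'I_N) rate q * g q.2 = Ls s * (\sum_i lam N i * g i) / lN lam N.
Proof.
rewrite pair_sumE /Ls [\sum_(x <- s) _]big_tnth !mulr_suml; apply: eq_bigr => j _.
rewrite mulr_sumr mulr_suml; apply: eq_bigr => i _ /=.
by rewrite /rate /=; field; rewrite gt_eqF.
Qed.

Lemma rate_sum2 s k :
  \sum_(q : 'I_(size s) * 'I_N) (1 + cc k * lam N q.2) * rate q = Ls s * (1 + cc k * nuN lam N).
Proof.
under eq_bigr do rewrite mulrC.
rewrite (rate_sum s (fun i => 1 + cc k * lam N i)) /=; rewrite /nuN -!mulrA; congr (_ * _).
have -> : \sum_i lam N i * (1 + cc k * lam N i) = lN lam N + cc k * \sum_(i < N) lam N i ^+ 2.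
  rewrite /lN mulr_sumr -big_split /=; apply: eq_bigr => i _; ring.
by field; rewrite gt_eqF.
Qed.

Lemma tail_bound M k : 0 < M -> forall acc s,
  (nr_tail lam M k acc s <= ((((acc + size s)%:R + cc k * Ls s) / M))%:E)%E.
Proof.
move=> M0; elim: k => [|k IH] acc s /=.
  case: ifP => H; rewrite lee_fin mul0r addr0.
    by rewrite ler_pdivlMr // mul1r ltW.
  by rewrite divr_ge0 // ltW.
set a := (acc + size s)%N.
apply: ge_ereal_sup => _ [A [finA _] <-].
rewrite fsbig_finite //.
set B := fun X : {ffun 'I_(size s) * 'I_N -> nat} =>
  (a%:R + \sum_q (X q)%:R * (1 + cc k * lam N q.2)) / M.
have H1 : forall X, ((nr_weight lam X)%:E * nr_tail lam M k a (nr_children X) <= (nr_weight lam X * B X)%:E)%E.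
  move=> X; rewrite EFinM; apply: lee_wpmul2l; first by rewrite lee_fin weight_ge0.
  apply: (le_trans (IH _ _)); rewrite lee_fin /B.
  rewrite ler_pM2r ?invr_gt0 // natrD -addrA lerD2l le_eqVlt; apply/orP; left; apply/eqP.
  rewrite -(children_sum (fun i => 1 + cc k * lam N i)) /Ls -sum1_size natr_sum mulr_sumr -big_split /=.
  by apply: eq_bigr => x _.
apply: le_trans; first by apply: lee_sum => X _; exact: H1.
rewrite sumEFin lee_fin.
have U : uniq (finmap.enum_fset (fset_set A)) := finmap.fset_uniq _.
move: (finmap.enum_fset (fset_set A)) U => t U.
set g := fun i : 'I_N => 1 + cc k * lam N i.
have g0 : forall i, 0 <= g i by move=> i; rewrite /g addr_ge0 // mulr_ge0 ?cc_ge0 // ltW.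
have E2 : forall X, nr_weight lam X * B X =
   a%:R / M * nr_weight lam X + \sum_q g q.2 / M * (nr_weight lam X * (X q)%:R).
  move=> X; rewrite /B mulrDl mulrDr mulr_suml mulr_sumr; congr (_ + _).
    by rewrite mulrC -mulrA [M^-1 * _]mulrC.
  by apply: eq_bigr => q _; rewrite /g; ring.
rewrite (eq_bigr _ (fun X _ => E2 X)) big_split /= exchange_big /=.
rewrite -mulr_sumr.
apply: (@le_trans _ _ (a%:R / M * 1 + \sum_q g q.2 / M * rate q)).
  apply: lerD.
    by apply: ler_wpM2l; [rewrite divr_ge0 // ltW | exact: E0].
  apply: ler_sum => q _; rewrite -mulr_sumr; apply: ler_wpM2l.
    by rewrite divr_ge0 // ltW.
  exact: E1.
rewrite mulr1 [(1 + _) * Ls s]mulrC -(rate_sum2 s k).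
rewrite mulrDl mulr_suml le_eqVlt; apply/orP; left; apply/eqP; congr (_ + _).
by apply: eq_bigr => q _; rewrite /g; field; rewrite gt_eqF.
Qed.

Lemma nr_prob_bound t M : 0 < M -> (0 < N)%N ->
  (nr_prob lam N t M <= ((1 + cc t * muN lam N) / M)%:E)%E.
Proof.
move=> M0 N0; rewrite /nr_prob.
apply: (@le_trans _ _ (\sum_(m < N) ((N%:R^-1 * ((1 + cc t * lam N m) / M))%:E))%E).
  apply: lee_sum => m _; rewrite EFinM; apply: lee_wpmul2l; first by rewrite lee_fin invr_ge0.
  apply: (le_trans (tail_bound M t M0 0 [:: m])).
  by rewrite /Ls big_seq1 /= add0n.
rewrite sumEFin lee_fin le_eqVlt; apply/orP; left; apply/eqP.
rewrite /muN -mulr_sumr -mulr_suml big_split /= -mulr_sumr sumr_const card_ord.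
by field; rewrite gt_eqF // pnatr_eq0 -lt0n N0.
Qed.

Definition r2 (u v : 'I_N) : R := lam N u * lam N v / lN lam N.

Fixpoint pw (a : 'I_N) (p : seq 'I_N) : R :=
  if p is x :: q then r2 a x * pw x q else 1.

Fixpoint wsum (k : nat) (F : seq 'I_N -> R) : R :=
  if k is k'.+1 then \sum_(x : 'I_N) wsum k' (fun q => F (x :: q)) else F [::].

Lemma pw_ge0 a p : 0 <= pw a p.
Proof.
elim: p a => [|x q IH] a //=; rewrite mulr_ge0 //.
by rewrite /r2 divr_ge0 ?(ltW lN_pos) // mulr_ge0 // ltW.
Qed.

Lemma wsum_ge0 k F : (forall p, 0 <= F p) -> 0 <= wsum k F.
Proof.
elim: k F => [|k IH] F F0 //=; by apply: sumr_ge0 => x _; apply: IH.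
Qed.

Lemma wsum_le k F G : (forall p, F p <= G p) -> wsum k F <= wsum k G.
Proof.
elim: k F G => [|k IH] F G FG //=; by apply: ler_sum => x _; apply: IH.
Qed.

Lemma wsum_sum (I : Type) (r : seq I) k (F : I -> seq 'I_N -> R) :
  wsum k (fun p => \sum_(i <- r) F i p) = \sum_(i <- r) wsum k (F i).
Proof.
elim: k F => [|k IH] F //=.
rewrite exchange_big /=; apply: eq_bigr => x _.
exact: (IH (fun i q => F i (x :: q))).
Qed.

Lemma wsum_scale k c F : wsum k (fun p => c * F p) = c * wsum k F.
Proof.
elim: k F => [|k IH] F //=.
rewrite mulr_sumr; apply: eq_bigr => x _.
exact: (IH (fun q => F (x :: q))).
Qed.

Lemma wsum_pt k F p : (forall q, 0 <= F q) -> size p = k -> F p <= wsum k F.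
Proof.
elim: k F p => [|k IH] F p F0.
  by case: p.
case: p => [|x p] //= [sp].
rewrite (bigD1 x) //= ler_wpDr //; last by apply: IH.
by apply: sumr_ge0 => y _; apply: wsum_ge0.
Qed.

Lemma wsum_pw k a : wsum k.+1 (pw a) = lam N a * nuN lam N ^+ k.
Proof.
elim: k a => [|k IH] a.
  rewrite /= /r2; under eq_bigr do rewrite mulr1.
  rewrite -mulr_suml -mulr_sumr /lN; field; rewrite gt_eqF //.
have -> : wsum k.+2 (pw a) = \sum_x r2 a x * wsum k.+1 (pw x).
  by rewrite [LHS]/=; apply: eq_bigr => x _; rewrite -wsum_scale.
under eq_bigr do rewrite IH.
rewrite /r2 /nuN exprS.
have -> : \sum_(i < N) lam N i ^+ 2 = \sum_x lam N x * lam N x.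
  by apply: eq_bigr => x _; rewrite expr2.
rewrite !mulr_suml mulr_sumr; apply: eq_bigr => x _.
by field; rewrite gt_eqF.
Qed.

Lemma cc_sum k : cc k = \sum_(i < k) nuN lam N ^+ i.
Proof.
elim: k => [|k IH]; first by rewrite big_ord0.
by rewrite /= IH big_ord_recl expr0 mulr_suml; congr (_ + _); apply: eq_bigr => i _; rewrite exprSr.
Qed.

Lemma wsum_pw_total t a : \sum_(k < t.+1) wsum k (pw a) = 1 + cc t * lam N a.
Proof.
rewrite big_ord_recl cc_sum; congr (_ + _).
rewrite mulr_suml; apply: eq_bigr => i _.
by rewrite lift0 wsum_pw mulrC.
Qed.

Lemma ball_path (E : {ffun 'I_N * 'I_N -> nat}) (A : 'I_N) t j :
  j \in Defs.ball E A t -> exists p, [/\ path (pg_adj E) A p, uniq (A :: p),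
                                   last A p = j & (size p <= t)%N].
Proof.
suff H : j \in Defs.ball E A t -> exists p, [/\ path (pg_adj E) A p, last A p = j & (size p <= t)%N].
  move=> /H [p [Hp Hl Hs]]; move: Hl; case: (shortenP Hp) => p' Hp' Hu Hsub Hl.
  exists p'; split => //; apply: leq_trans Hs.
  by apply: uniq_leq_size => //; case/andP: Hu.
elim: t j => [|t IH] j /=.
  by rewrite inE => /eqP ->; exists [::].
rewrite inE => /orP [/IH [p [Hp Hl Hs]] | ].
  by exists p; split => //; apply: leq_trans Hs _.
rewrite inE => /existsP [i /andP [/IH [p [Hp Hl Hs]] Hij]].
exists (rcons p j); split.
- by rewrite rcons_path Hp Hl.
- by rewrite last_rcons.
- by rewrite size_rcons ltnS.
Qed.

Definition indp (E : {ffun 'I_N * 'I_N -> nat}) (A : 'I_N) (p : seq 'I_N) : R :=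
  (path (pg_adj E) A p && uniq (A :: p))%:R.

Lemma ball_count (E : {ffun 'I_N * 'I_N -> nat}) (A : 'I_N) t :
  (#|Defs.ball E A t|)%:R <= \sum_(k < t.+1) wsum k (indp E A).
Proof.
have indp0 : forall p, 0 <= indp E A p by move=> p; rewrite /indp ler0n.
pose F j := \sum_(k < t.+1) wsum k (fun p => indp E A p * (last A p == j)%:R).
have F0 : forall j, 0 <= F j.
  move=> j; apply: sumr_ge0 => k _; apply: wsum_ge0 => p; rewrite mulr_ge0 //.
apply: (@le_trans _ _ (\sum_j F j)).
  rewrite -sum1_card natr_sum.
  rewrite [X in _ <= X](bigID (mem (Defs.ball E A t))) /= -[leLHS]addr0.
  apply: lerD; last by apply: sumr_ge0.
  apply: ler_sum => j Hj.
  have [p [Hp Hu Hl Hs]] := ball_path E A t j Hj.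
  have Hs' : (size p < t.+1)%N by rewrite ltnS.
  rewrite /F (bigD1 (Ordinal Hs')) //=.
  rewrite ler_wpDr //; first by apply: sumr_ge0 => k _; apply: wsum_ge0 => q; rewrite mulr_ge0.
  apply: (@le_trans _ _ (indp E A p * (last A p == j)%:R)).
    by rewrite /indp Hp Hu Hl eqxx mulr1.
  by apply: wsum_pt => // q; rewrite mulr_ge0.
rewrite /F exchange_big /=; apply: ler_sum => k _.
rewrite -wsum_sum; apply: wsum_le => p.
rewrite -mulr_sumr (bigD1 (last A p)) //= eqxx big1 ?addr0 ?mulr1 //.
by move=> j; rewrite eq_sym => /negPf ->.
Qed.

Definition nrm (a x : 'I_N) : 'I_N * 'I_N := if (a < x)%N then (a, x) else (x, a).

Fixpoint es (a : 'I_N) (p : seq 'I_N) : seq ('I_N * 'I_N) :=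
  if p is x :: q then nrm a x :: es x q else [::].

Lemma es_mem x q e : e \in es x q -> (e.1 \in x :: q) && (e.2 \in x :: q).
Proof.
elim: q x => [|y q IH] x //=.
rewrite inE => /orP [/eqP -> | /IH /andP [H1 H2]].
  by rewrite /nrm; case: ifP => _ /=; rewrite !in_cons !eqxx ?orbT.
by rewrite !inE in H1 H2 *; rewrite H1 H2 !orbT.
Qed.

Lemma es_uniq a p : uniq (a :: p) -> uniq (es a p).
Proof.
elim: p a => [|x q IH] a //= /andP [Ha Hu].
rewrite (IH x Hu) andbT; apply/negP => Hin; have /andP [H1 H2] := es_mem x q (nrm a x) Hin.
move: H1 H2; rewrite /nrm; case: ifP => _ /= H1 H2.
  by rewrite H1 in Ha.
by rewrite H2 in Ha.
Qed.

Lemma es_lt a p e : uniq (a :: p) -> e \in es a p -> (e.1 < e.2)%N.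
Proof.
elim: p a => [|x q IH] a //= /andP [Ha Hu].
rewrite inE => /orP [/eqP -> | /(IH x Hu) //].
have axne : a != x by apply: contraNneq Ha => ->; rewrite mem_head.
rewrite /nrm; case: ifP => //= /negbT; rewrite -leqNgt leq_eqVlt => /orP [/eqP xa|] //.
by case/eqP: axne; apply: val_inj => /=; rewrite xa.
Qed.

Lemma es_pos (E : {ffun 'I_N * 'I_N -> nat}) a p e :
  path (pg_adj E) a p -> e \in es a p -> (0 < E e)%N.
Proof.
elim: p a => [|x q IH] a //= /andP [Hax Hp].
rewrite inE => /orP [/eqP -> | /(IH x Hp) //].
move: Hax; rewrite /pg_adj /nrm; case: (ltngtP a x) => H //=.
by rewrite orbF.
Qed.

Lemma es_prod a p : \prod_(e <- es a p) r2 e.1 e.2 = pw a p.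
Proof.
elim: p a => [|x q IH] a /=; first by rewrite big_nil.
rewrite big_cons IH; congr (_ * _).
by rewrite /nrm; case: ifP => _ //=; rewrite /r2 [lam N x * _]mulrC.
Qed.


Definition wf (q : 'I_N * 'I_N) (n : nat) : R :=
  if (q.1 < q.2)%N then poisson_pmf (lam N q.1 * lam N q.2 / lN lam N) n
  else if n == 0%N then 1 else 0.

Lemma wf_ge0 q n : 0 <= wf q n.
Proof. by rewrite /wf; case: ifP => _; [apply: poisson_pmf_ge0 | case: ifP]. Qed.

Lemma r2_pos u v : 0 < r2 u v.
Proof. by rewrite /r2 divr_gt0 // mulr_gt0. Qed.

Lemma key (A : 'I_N) p (t : seq {ffun 'I_N * 'I_N -> nat}) : uniq t ->
  \sum_(E <- t) pg_weight lam E * indp E A p <= pw A p.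
Proof.
move=> ut.
case Hu: (uniq (A :: p)); last first.
  by rewrite big1 ?pw_ge0 // => E _; rewrite /indp Hu andbF mulr0.
set S := es A p.
pose h q n := wf q n * (if q \in S then (0 < n)%:R else 1).
apply: (@le_trans _ _ (\sum_(E <- t) \prod_q h q (E q))).
  apply: ler_sum => E _; rewrite /h big_split /=.
  have -> : pg_weight lam E = \prod_q wf q (E q) by [].
  rewrite /indp Hu andbT; case Hp: (path (pg_adj E) A p).
    rewrite mulr1 [X in _ <= _ * X]big1 ?mulr1 // => q _.
    by case: ifP => // /(es_pos E A p q Hp) ->.
  rewrite mulr0 mulr_ge0 //; apply: prodr_ge0 => q _; first by apply: wf_ge0.
  by case: ifP.
apply: (@le_trans _ _ (\prod_q (if q \in S then r2 q.1 q.2 else 1))).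
  apply: (@box R _ h) => //.
    by move=> q k; rewrite /h mulr_ge0 ?wf_ge0 //; case: ifP.
  move=> q n; rewrite /h; case: ifP => qS.
    have lt := es_lt A p q Hu qS.
    apply: le_trans; last exact: (@pois_partial2 R (r2 q.1 q.2) n (r2_pos q.1 q.2)).
    apply: ler_sum => k _; rewrite /wf lt mulrC ler_wpM2r ?poisson_pmf_ge0 //.
    by rewrite ler_nat; case: (k : nat).
  under eq_bigr do rewrite mulr1.
  rewrite /wf; case Hlt: (q.1 < q.2)%N; first by apply: pois_partial1; apply: r2_pos.
  case: n => [|n]; first by rewrite big_ord0.
  by rewrite big_ord_recl /= big1 ?addr0 // => i _.
rewrite -big_mkcond /= -big_uniq; last by apply: es_uniq.
by rewrite es_prod.
Qed.

Lemma pgw_ge0 (E : {ffun 'I_N * 'I_N -> nat}) : 0 <= pg_weight lam E.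
Proof.
have -> : pg_weight lam E = \prod_q wf q (E q) by [].
by apply: prodr_ge0 => q _; apply: wf_ge0.
Qed.

Lemma pg_esum_bound t M A : 0 < M ->
  (\esum_(E in [set: {ffun 'I_N * 'I_N -> nat}])
       ((pg_weight lam E)%:E * (if (M < #|Defs.ball E A t|%:R)%R then 1 else 0)%E)
   <= (((1 + cc t * lam N A) / M)%:E))%E.
Proof.
move=> M0.
apply: ge_ereal_sup => _ [B [finB _] <-].
rewrite fsbig_finite //.
have H1 : forall E : {ffun 'I_N * 'I_N -> nat},
  ((pg_weight lam E)%:E * (if (M < #|Defs.ball E A t|%:R)%R then 1 else 0)%E <=
   (pg_weight lam E * ((\sum_(k < t.+1) wsum k (indp E A)) / M))%:E)%E.
  move=> E; rewrite EFinM; apply: lee_wpmul2l; first by rewrite lee_fin pgw_ge0.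
  have S0 : 0 <= \sum_(k < t.+1) wsum k (indp E A).
    by apply: sumr_ge0 => k _; apply: wsum_ge0 => p; rewrite /indp ler0n.
  case: ifP => H; rewrite lee_fin; last by rewrite divr_ge0 // ltW.
  rewrite ler_pdivlMr // mul1r; apply: (le_trans (ltW H)).
  exact: ball_count.
apply: le_trans; first by apply: lee_sum => E _; exact: H1.
rewrite sumEFin lee_fin.
have U : uniq (finmap.enum_fset (fset_set B)) := finmap.fset_uniq _.
move: (finmap.enum_fset (fset_set B)) U => s U.
have E2 : \sum_(E <- s) pg_weight lam E * ((\sum_(k < t.+1) wsum k (indp E A)) / M) =
  (\sum_(k < t.+1) wsum k (fun p => \sum_(E <- s) pg_weight lam E * indp E A p)) / M.
  rewrite [RHS]mulr_suml.
  under eq_bigr do rewrite mulr_suml mulr_sumr.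
  rewrite exchange_big /=; apply: eq_bigr => k _.
  rewrite wsum_sum mulr_suml; apply: eq_bigr => E _.
  by rewrite wsum_scale mulrA.
rewrite E2 ler_pM2r ?invr_gt0 // -wsum_pw_total.
apply: ler_sum => k _; apply: wsum_le => p.
exact: key.
Qed.

Lemma pg_prob_bound t M : 0 < M -> (0 < N)%N ->
  (pg_prob lam N t M <= ((1 + cc t * muN lam N) / M)%:E)%E.
Proof.
move=> M0 N0; rewrite /pg_prob.
apply: (@le_trans _ _ (\sum_(m < N) ((N%:R^-1 * ((1 + cc t * lam N m) / M))%:E))%E).
  apply: lee_sum => m _; rewrite EFinM; apply: lee_wpmul2l; first by rewrite lee_fin invr_ge0.
  exact: pg_esum_bound.
rewrite sumEFin lee_fin le_eqVlt; apply/orP; left; apply/eqP.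
rewrite /muN -mulr_sumr -mulr_suml big_split /= -mulr_sumr sumr_const card_ord.
by field; rewrite gt_eqF // pnatr_eq0 -lt0n N0.
Qed.

End P3.
Section Analytic.
Variable R : realType.

Lemma powR_expR (x y : R) : 0 < x -> x `^ y = expR (y * ln x).
Proof. by move=> x0; rewrite /powR gt_eqF. Qed.

Lemma analytic (nu mu c a1 eta delta : R) (N t : nat) (nuN muN : R) :
  1 < nu -> 0 < a1 -> 0 <= c -> - 2^-1 < eta < 2^-1 ->
  (1 <= N)%N -> nu <= N%:R ->
  0 <= nuN -> nuN <= nu + c * N%:R `^ (- a1) -> 0 <= muN -> muN <= mu + c ->
  t%:R <= (2^-1 + eta) * logb nu N%:R ->
  (1 + (\sum_(k < t) nuN ^+ k) * muN) / N%:R `^ (2^-1 + delta) <=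
  (1 + expR (c / (a1 * ln nu)) * (mu + c)) * logb nu N%:R * N%:R `^ (- (delta - eta)).
Proof.
move=> nu1 a10 c0 /andP [eta1 eta2] N1 nuN_ Hn0 Hn1 Hm0 Hm1 Ht.
set x : R := N%:R.
have x1 : 1 <= x by rewrite /x ler1n.
have x0 : 0 < x by apply: lt_le_trans x1.
have lnnu : 0 < ln nu by apply: ln_gt0.
set L := logb nu x.
have lnnux : ln nu <= ln x by rewrite ler_ln // posrE (lt_trans _ nu1).
have L1 : 1 <= L by rewrite /L /logb ler_pdivlMr // mul1r.
have L0 : 0 <= L by apply: le_trans L1.
set P := x `^ (2^-1 + eta).
have P1 : 1 <= P.
  have h : 0 <= 2^-1 + eta :> R by lra.
  by rewrite /P -[leLHS](powRr0 x); apply: ler_powR.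
have P0 : 0 <= P by apply: le_trans P1.
have tL : t%:R <= L.
  apply: (le_trans Ht); rewrite -[leRHS]mul1r ler_wpM2r //; lra.
set e := c * x `^ (- a1).
have e0 : 0 <= e by rewrite mulr_ge0 // powR_ge0.
set K0 := c / (a1 * ln nu).
have teK : t%:R * e <= K0.
  apply: (@le_trans _ _ (L * e)); first by rewrite ler_wpM2r.
  rewrite /L /logb /e /K0.
  have H : a1 * ln x <= x `^ a1.
    by rewrite -ln_powR ltW // ln_sublinear // powR_gt0.
  rewrite powRN.
  have xa0 : 0 < x `^ a1 by rewrite powR_gt0.
  rewrite -(ler_pM2r (mulr_gt0 a10 lnnu)).
  have -> : ln x / ln nu * (c * (x `^ a1)^-1) * (a1 * ln nu) = c * ((a1 * ln x) / x `^ a1).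
    by field; rewrite !gt_eqF.
  have -> : c / (a1 * ln nu) * (a1 * ln nu) = c * 1.
    by field; rewrite !gt_eqF.
  by rewrite ler_wpM2l // ler_pdivrMr // mul1r.
have nut : nu ^+ t <= P.
  have -> : nu ^+ t = expR (t%:R * ln nu) by rewrite expRM_natl lnK // posrE (lt_trans _ nu1).
  rewrite /P powR_expR // ler_expR.
  have := Ht; rewrite /logb -(ler_pM2r lnnu) => H.
  by apply: (le_trans H); rewrite le_eqVlt; apply/orP; left; apply/eqP; field; rewrite gt_eqF.
have nueK : nu + e <= nu * expR e.
  apply: (@le_trans _ _ (nu * (1 + e))); first by rewrite mulrDr mulr1 lerD2l ler_peMl // ltW.
  by rewrite ler_wpM2l ?expR_ge1Dx // ltW // (lt_trans _ nu1).
have powk : forall k, (k < t)%N -> nuN ^+ k <= P * expR K0.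
  move=> k kt.
  apply: (@le_trans _ _ ((nu + e) ^+ t)).
    apply: (@le_trans _ _ ((nu + e) ^+ k)).
      by apply: lerXn2r => //; rewrite nnegrE // addr_ge0 // ltW // (lt_trans _ nu1).
    apply: ler_weXn2l; last by apply: ltnW.
    by rewrite (le_trans (ltW nu1)) // lerDl.
  have nu0 : 0 <= nu by rewrite ltW // (lt_trans _ nu1).
  have h1 : nu + e \in Num.nneg by rewrite nnegrE addr_ge0.
  have h2 : nu * expR e \in Num.nneg by rewrite nnegrE mulr_ge0 // expR_ge0.
  apply: (le_trans (lerXn2r t h1 h2 nueK)).
  rewrite exprMn -expRM_natl; apply: ler_pM => //; first by rewrite exprn_ge0.
  by rewrite ler_expR.
have sumB : \sum_(k < t) nuN ^+ k <= L * (P * expR K0).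
  apply: (@le_trans _ _ (\sum_(k < t) (P * expR K0))).
    by apply: ler_sum => k _; apply: powk.
  rewrite sumr_const card_ord -mulr_natl ler_wpM2r //.
  by rewrite mulr_ge0 // expR_ge0.
set D := x `^ (2^-1 + delta).
have D0 : 0 < D by rewrite /D powR_gt0.
have -> : x `^ (- (delta - eta)) = P / D.
  rewrite (_ : - (delta - eta) = (2^-1 + eta) - (2^-1 + delta)); last by ring.
  by rewrite /P /D powRB //; apply/implyP => _; rewrite gt_eqF.
rewrite mulrA ler_pM2r ?invr_gt0 //.
have muc : 0 <= mu + c by apply: le_trans Hm1.
apply: (@le_trans _ _ (L * P + L * (P * expR K0) * (mu + c))).
  apply: lerD; first by rewrite -[leLHS]mulr1 ler_pM // ler01.
  apply: ler_pM => //; first by apply: sumr_ge0 => k _; apply: exprn_ge0.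
by rewrite le_eqVlt; apply/orP; left; apply/eqP; ring.
Qed.

End Analytic.

Theorem lemmaD2 (R : realType) (lam : forall N : nat, 'I_N -> R)
  (lam_pos : forall (N : nat) (i : 'I_N), 0 < lam N i)
  (mu nu : R) (mu_pos : 0 < mu) (nu_gt1 : 1 < nu)
  (* (C1) *)
  (C1 : exists (alpha1 C : R) (N0 : nat), 0 < alpha1 /\
     forall N : nat, (N0 <= N)%N ->
       `|muN lam N - mu| <= C * N%:R `^ (- alpha1) /\
       `|nuN lam N - nu| <= C * N%:R `^ (- alpha1))
  (* (C2) *)
  (C2 : exists (f g : nat -> R) (alpha2 C : R) (N0 : nat), 0 < alpha2 /\
     forall N : nat, (N0 <= N)%N ->
       (dTV (fN lam N) f <= (C * N%:R `^ (- alpha2))%:E)%E /\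
       (dTV (gN lam N) g <= (C * N%:R `^ (- alpha2))%:E)%E)
  (* (C3) *)
  (C3 : exists tau : R, 3 < tau /\
     forall eps : R, 0 < eps -> (tau - 1)^-1 + eps < 2^-1 ->
       (exists (K : R) (N0 : nat), forall N : nat, (N0 <= N)%N ->
          N%:R^-1 * \sum_(i < N) lam N i `^ (tau - 1 - eps) <= K) /\
       (forall (N : nat) (i : 'I_N), lam N i <= N%:R `^ ((tau - 1)^-1 + eps)))
  (eta delta : R)
  (eta_range : - 2^-1 < eta < 2^-1) (delta_range : - 2^-1 < delta < 2^-1) :
  exists (C : R) (N0 : nat), forall N t : nat, (N0 <= N)%N ->
    t%:R <= (2^-1 + eta) * logb nu N%:R ->
    (nr_prob lam N t (N%:R `^ (2^-1 + delta))
       <= (C * logb nu N%:R * N%:R `^ (- (delta - eta)))%:E)%E /\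
    (pg_prob lam N t (N%:R `^ (2^-1 + delta))
       <= (C * logb nu N%:R * N%:R `^ (- (delta - eta)))%:E)%E.
Proof.
case: C1 => a1 [C [N0 [a1pos HC]]].
set c := `|C|.
have nu0 : 0 < nu by apply: lt_trans nu_gt1.
have [n1 Hn1] : exists n : nat, nu <= n%:R.
  by exists (Num.Def.archi_bound nu); apply: ltW; apply: archi_boundP; apply: ltW.
exists (1 + expR (c / (a1 * ln nu)) * (mu + c)), (maxn N0 (maxn 1 n1)).
move=> N t HN Ht.
move: HN; rewrite !geq_max => /and3P [HN0 HN1 Hn1N].
have nuN_le : nu <= N%:R by apply: (le_trans Hn1); rewrite ler_nat.
have [Hmu Hnu] := HC N HN0.
have lpos : forall i : 'I_N, 0 < lam N i := lam_pos N.
have lNpos : 0 < lN lam N.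
  pose i0 : 'I_N := Ordinal HN1.
  apply: (lt_le_trans (lpos i0)); rewrite /lN (bigD1 i0) //= lerDl sumr_ge0 // => i _.
  exact: ltW.
set M := N%:R `^ (2^-1 + delta).
have M0 : 0 < M by rewrite /M powR_gt0 // ltr0n.
have pa : 0 <= N%:R `^ (- a1) :> R by apply: powR_ge0.
have pa1 : N%:R `^ (- a1) <= 1 :> R.
  rewrite -[leRHS](powRr0 N%:R); apply: ler_powR; first by rewrite ler1n.
  by rewrite oppr_le0 ltW.
have Cc : C * N%:R `^ (- a1) <= c * N%:R `^ (- a1) by rewrite ler_wpM2r // real_ler_norm // num_real.
have key : (1 + cc R lam N t * muN lam N) / M <=
    (1 + expR (c / (a1 * ln nu)) * (mu + c)) * logb nu N%:R * N%:R `^ (- (delta - eta)).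
  rewrite (cc_sum R lam N t) /M.
  apply: analytic => //.
  - by rewrite /c normr_ge0.
  - by apply: nuN_ge0.
  - move: Hnu; rewrite ler_distl => /andP [_ H].
    by apply: (le_trans H); rewrite lerD2l.
  - by rewrite /muN mulr_ge0 // ?invr_ge0 // sumr_ge0 // => i _; apply: ltW.
  - move: Hmu; rewrite ler_distl => /andP [_ H].
    apply: (le_trans H); rewrite lerD2l (le_trans Cc) //.
    by rewrite -[leRHS]mulr1 ler_wpM2l // /c normr_ge0.
split.
  apply: le_trans; first exact: (nr_prob_bound R lam N lpos lNpos t M M0 HN1).
  by rewrite lee_fin.
apply: le_trans; first exact: (pg_prob_bound R lam N lpos lNpos t M M0 HN1).
by rewrite lee_fin.
Qed.
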